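(* Let $\Sigma\subset\mathbb{R}^{n+1}$ be a pure, hereditary, $(n+1)$-dimensional fan with smoothness parameters $\alpha$. Then $H_{n+1}(\mathcal{R}/\mathcal{J}[\Sigma,\Sigma^{-1}])=C^\alpha(\Sigma)$.
   Context: $S=\mathbb{R}[x_0,\ldots,x_n]$. A cone is the positive hull of finitely many vectors, of dimension that of its linear span $\mathrm{aff}(\gamma)$; a fan is a finite set of cones closed under faces, any two meeting in a common face; $\Sigma_i$ = $i$-dim cones, facets = maximal cones; pure: all facets of dim $n+1$; hereditary: for every face $\psi$ the graph on facets containing $\psi$ with edges for pairs meeting in an $n$-face is connected; $\partial\Sigma$ = subfan of faces contained in an $n$-face lying in exactly one facet; others interior. $l_\tau$ generates the ideal of $\mathrm{aff}(\tau)$. Smoothness parameters: integers $\alpha(\tau)\ge-1$ ($\tau\in\Sigma_n$), $\ge0$ on interior $\tau$; $\Sigma^{-1}$ = subfan of $\partial\Sigma$ of cones contained in some $\tau$ with $\alpha(\tau)=-1$; $J(\tau)=\langle l_\tau^{\alpha(\tau)+1}\rangle$ for $\tau\in\Sigma_n\setminus\Sigma^{-1}_n$, $J(\gamma)=\sum_{\tau\in\Sigma_n\setminus\Sigma^{-1}_n,\gamma\subseteq\tau}J(\tau)$ for non-facets, $J(\sigma)=0$ for facets. With $u_\rho$ unit ray generators, $P(\gamma)=\mathrm{conv}(\{0\}\cup\{u_\rho:\rho\subseteq\gamma\})$, $\mathrm{lk}(\gamma)=\mathrm{conv}\{u_\rho\}$; $\mathcal{R}/\mathcal{J}[\Sigma,\Sigma^{-1}]_i=\bigoplus_{\gamma\in\Sigma_i\setminus\Sigma^{-1}_i}S/J(\gamma)$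 ($0\le i\le n+1$) with differential induced by the cellular boundary of the relative cellular chain complex of $(P(\Sigma),\mathrm{lk}(\Sigma)\cup P(\Sigma^{-1}))$ with $S$ coefficients. The spline module $C^\alpha(\Sigma)$ is the set of tuples $(F_\sigma)_{\sigma\in\Sigma_{n+1}}\in\bigoplus_{\sigma\in\Sigma_{n+1}}S$ such that $l_\tau^{\alpha(\tau)+1}\mid F_{\sigma_1}-F_{\sigma_2}$ whenever $\sigma_1\cap\sigma_2=\tau\in\Sigma_n$, and $l_\tau^{\alpha(\tau)+1}\mid F_\sigma$ whenever $\tau\in\Sigma_n\cap\partial\Sigma$ and $\tau\subseteq\sigma$. *)

(* Defs.v *)
From HB Require Import structures.
From mathcomp Require Import all_boot all_order all_algebra.
From mathcomp Require Import reals.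
From mathcomp Require Import mpoly.
From Stdlib Require Import ClassicalEpsilon Relation_Operators.

Set Implicit Arguments.
Unset Strict Implicit.
Unset Printing Implicit Defensive.

Import Order.TTheory GRing.Theory Num.Theory.
Local Open Scope ring_scope.

Definition pb (P : Prop) : bool :=
  if excluded_middle_informative P then true else false.

Section Fans.
Variables (R : realType) (n : nat).

Notation vec := 'rV[R]_(n.+1).

Definition dotv (w x : vec) : R := \sum_(i < n.+1) w 0 i * x 0 i.

Definition poshull (g : seq vec) (x : vec) : Prop :=
  exists c : 'I_(size g) -> R,
    (forall i, 0 <= c i) /\ x = \sum_(i < size g) c i *: g`_i.

Definition gens_mx (g : seq vec) : 'M[R]_(size g, n.+1) :=
  \matrix_(i < size g, j < n.+1) (g`_i) 0 j.
Definition cdim (g : seq vec) : nat := \rank (gens_mx g).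

Definition subsetv (A B : vec -> Prop) := forall x, A x -> B x.
Definition eqsetv (A B : vec -> Prop) := forall x, A x <-> B x.

Definition is_face (C F : vec -> Prop) : Prop :=
  exists w : vec, (forall x, C x -> 0 <= dotv w x) /\
                  eqsetv F (fun x => C x /\ dotv w x = 0).

(* A fan, given as a finite family of pairwise distinct cones indexed by 'I_m *)
Definition is_fan (m : nat) (G : 'I_m -> seq vec) : Prop :=
  [/\ (forall i j, eqsetv (poshull (G i)) (poshull (G j)) -> i = j),
      (forall i F, is_face (poshull (G i)) F ->
                   exists j, eqsetv (poshull (G j)) F) &
      (forall i j, is_face (poshull (G i)) (fun x => poshull (G i) x /\ poshull (G j) x)
                /\ is_face (poshull (G j)) (fun x => poshull (G i) x /\ poshull (G j) x))].

Section OnFan.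
Variables (m : nat) (G : 'I_m -> seq vec).

Definition cone (i : 'I_m) := poshull (G i).
Definition sub (i j : 'I_m) := subsetv (cone i) (cone j).

Definition is_facet (i : 'I_m) : Prop := forall j, sub i j -> sub j i.

Definition pure : Prop := forall i, is_facet i -> cdim (G i) = n.+1.

Definition hered_adj (psi : 'I_m) (i j : 'I_m) : Prop :=
  [/\ is_facet i, is_facet j, sub psi i, sub psi j &
   exists k, cdim (G k) = n /\
     eqsetv (fun x => cone i x /\ cone j x) (cone k)].

Definition hereditary : Prop :=
  forall psi i j, is_facet i -> is_facet j -> sub psi i -> sub psi j ->
    clos_refl_trans _ (hered_adj psi) i j.

Definition in_one_facet (t : 'I_m) : Prop :=
  exists s, is_facet s /\ sub t s /\ (forall s', is_facet s' -> sub t s' -> s' = s).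

Definition in_boundary (g : 'I_m) : Prop :=
  exists t, cdim (G t) = n /\ sub g t /\ in_one_facet t.

Definition interior (g : 'I_m) : Prop := ~ in_boundary g.

Definition smoothness (alpha : 'I_m -> int) : Prop :=
  forall t, cdim (G t) = n ->
    (-1 <= alpha t) /\ (interior t -> 0 <= alpha t).

Definition in_Sm1 (alpha : 'I_m -> int) (g : 'I_m) : Prop :=
  in_boundary g /\
  exists t, [/\ cdim (G t) = n, in_boundary t, alpha t = -1 & sub g t].

(* l : 'I_m -> vec is a valid choice of normal vectors: for each n-cone tau,
   the linear form x |-> <l tau, x> generates the ideal of aff(tau). *)
Definition normals (l : 'I_m -> vec) : Prop :=
  forall t, cdim (G t) = n ->
    l t != 0 /\ forall x, cone t x -> dotv (l t) x = 0.

Definition lpoly (l : 'I_m -> vec) (t : 'I_m) : {mpoly R[n.+1]} :=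
  \sum_(i < n.+1) (l t) 0 i *: 'X_i.

Definition lpow (l : 'I_m -> vec) (alpha : 'I_m -> int) (t : 'I_m) :=
  lpoly l t ^+ absz (alpha t + 1).

Definition mdvd (p q : {mpoly R[n.+1]}) : Prop := exists r, q = r * p.

Definition in_J (l : 'I_m -> vec) (alpha : 'I_m -> int) (g : 'I_m)
    (p : {mpoly R[n.+1]}) : Prop :=
  (cdim (G g) = n.+1 /\ p = 0) \/
  (~ (cdim (G g) = n.+1) /\
   exists q : 'I_m -> {mpoly R[n.+1]},
     (forall t, ~ (cdim (G t) = n /\ ~ in_Sm1 alpha t /\ sub g t) -> q t = 0) /\
     p = \sum_(t < m) q t * lpow l alpha t).

(* cellular incidence number [P(sigma) : P(tau)] of the relative complex, for
   sigma of dim n+1 (oriented by the standard orientation of R^{n+1}) and tau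
   of dim n (co-oriented by the normal l tau) *)
Definition incid (l : 'I_m -> vec) (s t : 'I_m) : R :=
  if (cdim (G s) == n.+1) && (cdim (G t) == n) && pb (sub t s) then
    (if has (fun g => 0 < dotv (l t) g) (G s) then 1 else -1)
  else 0.

(* elements of  (+)_{sigma in Sigma_{n+1}} S  *)
Definition top_chain (F : 'I_m -> {mpoly R[n.+1]}) : Prop :=
  forall i, cdim (G i) != n.+1 -> F i = 0.

(* top differential  d_{n+1} : R/J_{n+1} -> R/J_n , component at tau *)
Definition dtop (l : 'I_m -> vec) (F : 'I_m -> {mpoly R[n.+1]}) (t : 'I_m)
    : {mpoly R[n.+1]} :=
  \sum_(s < m) incid l s t *: F s.

(* H_{n+1}(R/J[Sigma, Sigma^{-1}]) = ker d_{n+1}  (there are no (n+2)-cells) *)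
Definition Htop (l : 'I_m -> vec) (alpha : 'I_m -> int)
    (F : 'I_m -> {mpoly R[n.+1]}) : Prop :=
  top_chain F /\
  forall t, cdim (G t) = n -> ~ in_Sm1 alpha t -> in_J l alpha t (dtop l F t).

Definition spline (l : 'I_m -> vec) (alpha : 'I_m -> int)
    (F : 'I_m -> {mpoly R[n.+1]}) : Prop :=
  [/\ top_chain F,
   (forall s1 s2 t, cdim (G s1) = n.+1 -> cdim (G s2) = n.+1 -> cdim (G t) = n ->
      eqsetv (fun x => cone s1 x /\ cone s2 x) (cone t) ->
      mdvd (lpow l alpha t) (F s1 - F s2)) &
   (forall s t, cdim (G s) = n.+1 -> cdim (G t) = n -> in_boundary t -> sub t s ->
      mdvd (lpow l alpha t) (F s))].

End OnFan.
End Fans.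

(* Main.v *)
Require Import Defs.
From HB Require Import structures.
From mathcomp Require Import all_boot all_order all_algebra.
From mathcomp Require Import reals.
From mathcomp Require Import mpoly.
From Stdlib Require Import ClassicalEpsilon Classical.
From mathcomp Require Import lra.
Set Implicit Arguments.
Unset Strict Implicit.
Unset Printing Implicit Defensive.
Import Order.TTheory GRing.Theory Num.Theory.
Local Open Scope ring_scope.

Section LA.
Variables (R : realType) (n : nat).
Notation vec := 'rV[R]_(n.+1).

Lemma dotvE (w x : vec) : dotv w x = (x *m w^T) 0 0.
Proof. rewrite /dotv !mxE; apply: eq_bigr => i _; by rewrite !mxE mulrC. Qed.

Lemma dotvC (w x : vec) : dotv w x = dotv x w.
Proof. rewrite /dotv; apply: eq_bigr => i _; by rewrite mulrC. Qed.

Lemma dotvDr (w x y : vec) : dotv w (x + y) = dotv w x + dotv w y.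
Proof. rewrite /dotv -big_split; apply: eq_bigr => i _; by rewrite !mxE mulrDr. Qed.

Lemma dotvZr (w x : vec) a : dotv w (a *: x) = a * dotv w x.
Proof. rewrite /dotv mulr_sumr; apply: eq_bigr => i _; by rewrite !mxE mulrCA. Qed.

Lemma dotvNr (w x : vec) : dotv w (- x) = - dotv w x.
Proof. by rewrite -scaleN1r dotvZr mulN1r. Qed.

Lemma dotvBr (w x y : vec) : dotv w (x - y) = dotv w x - dotv w y.
Proof. by rewrite dotvDr dotvNr. Qed.

Lemma dotvZl (w x : vec) a : dotv (a *: w) x = a * dotv w x.
Proof. by rewrite dotvC dotvZr dotvC. Qed.

Lemma dotvBl (w v x : vec) : dotv (w - v) x = dotv w x - dotv v x.
Proof. by rewrite dotvC dotvBr !(dotvC x). Qed.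

Lemma dotv0r (w : vec) : dotv w 0 = 0.
Proof. by rewrite -(scale0r 0) dotvZr mul0r. Qed.

Lemma dotv_sumr (w : vec) k (c : 'I_k -> R) (g : 'I_k -> vec) :
  dotv w (\sum_(i < k) c i *: g i) = \sum_(i < k) c i * dotv w (g i).
Proof.
elim/big_ind2: _ => //; first by rewrite dotv0r.
  by move=> x1 x2 y1 y2 <- <-; rewrite dotvDr.
by move=> i _; rewrite dotvZr.
Qed.

Lemma dotv_self0 (w : vec) : dotv w w = 0 -> w = 0.
Proof.
rewrite /dotv => /eqP; rewrite psumr_eq0; last by move=> i _; rewrite -expr2 sqr_ge0.
move=> /allP H; apply/rowP => j; rewrite mxE.
have := H j (mem_index_enum j); rewrite implyTb mulf_eq0 orbb => /eqP //.
Qed.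

Lemma gens_mul (g : seq vec) (w : vec) (i : 'I_(size g)) :
  (gens_mx g *m w^T) i 0 = dotv w g`_i.
Proof. rewrite !mxE /dotv; apply: eq_bigr => j _; by rewrite !mxE mulrC. Qed.

Lemma full_rank0 k (M : 'M[R]_(k, n.+1)) (w : vec) :
  \rank M = n.+1 -> M *m w^T = 0 -> w = 0.
Proof.
move=> rk H.
have : (1%:M <= M)%MS by rewrite sub1mx /row_full rk.
case/submxP => D HD.
apply: trmx_inj; rewrite trmx0.
by rewrite -[w^T]mul1mx HD -mulmxA H mulmx0.
Qed.

Lemma gens_orth0 (g : seq vec) (w : vec) :
  cdim g = n.+1 -> (forall i : 'I_(size g), dotv w g`_i = 0) -> w = 0.
Proof.
move=> rk H; apply: (full_rank0 rk); apply/matrixP => i j.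
by rewrite ord1 gens_mul H mxE.
Qed.

Lemma rank_ext k (A : 'M[R]_(k, n.+1)) (v : vec) :
  \rank A = n -> ~~ (v <= A)%MS -> \rank (col_mx A v) = n.+1.
Proof.
move=> rk nv; apply/anti_leq/andP; split; first exact: rank_leq_col.
have lt : (A < col_mx A v)%MS.
  rewrite ltmxE; apply/andP; split.
    by rewrite -addsmxE addsmxSl.
  apply: contra nv; rewrite col_mx_sub => /andP [] //.
by have := rank_ltmx lt; rewrite rk.
Qed.

Lemma sub_gens (g : seq vec) (v : vec) :
  (v <= gens_mx g)%MS -> exists d : 'I_(size g) -> R, v = \sum_(i < size g) d i *: g`_i.
Proof.
case/submxP => D ->; exists (fun i => D 0 i); apply/rowP => j.
rewrite !mxE summxE; apply: eq_bigr => i _; rewrite !mxE.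
done.
Qed.

Lemma col_mul0 k (A : 'M[R]_(k, n.+1)) (v w : vec) :
  A *m w^T = 0 -> dotv w v = 0 -> col_mx A v *m w^T = 0.
Proof.
move=> HA Hv; rewrite mul_col_mx HA.
have -> : v *m w^T = 0 by apply/matrixP => i j; rewrite !ord1 -dotvE Hv mxE.
by rewrite col_mx0.
Qed.

Lemma gens_mul0 (g : seq vec) (w : vec) :
  (forall i : 'I_(size g), dotv w g`_i = 0) -> gens_mx g *m w^T = 0.
Proof. by move=> H; apply/matrixP => i j; rewrite ord1 gens_mul H mxE. Qed.

Lemma orth_in_span (g : seq vec) (l0 h : vec) :
  cdim g = n -> l0 != 0 -> (forall i : 'I_(size g), dotv l0 g`_i = 0) ->
  dotv l0 h = 0 -> (h <= gens_mx g)%MS.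
Proof.
move=> rk nz Hg Hh; apply/negPn/negP => nh.
have := full_rank0 (rank_ext rk nh) (col_mul0 (gens_mul0 Hg) Hh).
by move/eqP: nz.
Qed.

Lemma orth_line (g : seq vec) (l0 w : vec) :
  cdim g = n -> l0 != 0 -> (forall i : 'I_(size g), dotv l0 g`_i = 0) ->
  (forall i : 'I_(size g), dotv w g`_i = 0) ->
  w = (dotv w l0 / dotv l0 l0) *: l0.
Proof.
move=> rk nz Hl Hw.
have ll : dotv l0 l0 != 0 by apply: contra nz => /eqP/dotv_self0 ->.
have nl : ~~ (l0 <= gens_mx g)%MS.
  apply/negP => /sub_gens [d Hd]; move: ll; rewrite {2}Hd dotv_sumr big1 ?eqxx //.
  by move=> i _; rewrite Hl mulr0.
apply/eqP; rewrite -subr_eq0; apply/eqP.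
apply: (full_rank0 (rank_ext rk nl)); apply: col_mul0.
  apply: gens_mul0 => i; rewrite dotvBl dotvZl Hw Hl mulr0 subr0 //.
rewrite dotvBl dotvZl mulfVK ?subrr //.
Qed.


Lemma ph_gen (g : seq vec) (i : 'I_(size g)) : poshull g g`_i.
Proof.
exists (fun j => (j == i)%:R); split; first by move=> j; rewrite ler0n.
rewrite (bigD1 i) //= eqxx scale1r big1 ?addr0 // => j /negbTE ->.
by rewrite scale0r.
Qed.

Lemma ph_mem (g : seq vec) x : x \in g -> poshull g x.
Proof.
move=> xg; have xi : (index x g < size g)%N by rewrite index_mem.
by rewrite -(nth_index 0 xg); exact: (ph_gen (Ordinal xi)).
Qed.

Lemma ph_add (g : seq vec) x y : poshull g x -> poshull g y -> poshull g (x + y).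
Proof.
case=> [c [c0 ->]] [d [d0 ->]]; exists (fun i => c i + d i); split.
  by move=> i; rewrite addr_ge0.
by rewrite -big_split; apply: eq_bigr => i _; rewrite scalerDl.
Qed.

Lemma ph_scale (g : seq vec) a x : 0 <= a -> poshull g x -> poshull g (a *: x).
Proof.
move=> a0 [c [c0 ->]]; exists (fun i => a * c i); split.
  by move=> i; rewrite mulr_ge0.
by rewrite scaler_sumr; apply: eq_bigr => i _; rewrite scalerA.
Qed.

Lemma ph_orth (g : seq vec) w x :
  (forall i : 'I_(size g), dotv w g`_i = 0) -> poshull g x -> dotv w x = 0.
Proof.
move=> H [c [_ ->]]; rewrite dotv_sumr big1 // => i _; by rewrite H mulr0.
Qed.

End LA.

Lemma pbP (P : Prop) : pb P = true <-> P.
Proof. by rewrite /pb; case: excluded_middle_informative. Qed.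

Lemma key3 (R : realType) (x y z : R) : x = -y -> x = -z -> y = -z -> (y = 1 \/ y = -1) -> False.
Proof. by move=> ? ? ? []; lra. Qed.

Section Fan.
Variables (R : realType) (n m : nat) (G : 'I_m -> seq 'rV[R]_(n.+1))
  (l : 'I_m -> 'rV[R]_(n.+1)).
Hypotheses (fanG : is_fan G) (pureG : pure G) (normG : normals G l).

Lemma faceP i j : exists w, (forall x, cone G i x -> 0 <= dotv w x) /\
  (forall x, (cone G i x /\ cone G j x) <-> (cone G i x /\ dotv w x = 0)).
Proof. by case: fanG => _ _ H; case: (H i j) => [[w [H1 H2]] _]; exists w. Qed.

Lemma face_in i j w
  (Hw : forall x, (cone G i x /\ cone G j x) <-> (cone G i x /\ dotv w x = 0)) y :
  cone G i y -> cone G j y -> dotv w y = 0.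
Proof. by move=> a b; case: ((Hw y).1 (conj a b)). Qed.

Lemma face_out i j w
  (Hw : forall x, (cone G i x /\ cone G j x) <-> (cone G i x /\ dotv w x = 0)) y :
  cone G i y -> dotv w y = 0 -> cone G j y.
Proof. by move=> a b; case: ((Hw y).2 (conj a b)). Qed.

Lemma dotv0l (x : 'rV[R]_(n.+1)) : dotv 0 x = 0.
Proof. by rewrite /dotv big1 // => i _; rewrite mxE mul0r. Qed.

Lemma cone_inj i j : sub G i j -> sub G j i -> i = j.
Proof. by case: fanG => H _ _ ij ji; apply: H => x; split; [apply: ij|apply: ji]. Qed.

Lemma gen_cone i (k : 'I_(size (G i))) : cone G i (G i)`_k.
Proof. exact: ph_gen. Qed.

Lemma orth_cone_gens i w : (forall x, cone G i x -> dotv w x = 0) ->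
  forall k : 'I_(size (G i)), dotv w (G i)`_k = 0.
Proof. by move=> H k; apply: H; apply: gen_cone. Qed.

Lemma top_facet s : cdim (G s) = n.+1 -> is_facet G s.
Proof.
move=> ts j sj; have [w [w0 Hw]] := faceP j s.
have w00 : w = 0.
  apply: (gens_orth0 ts) => k.
  apply: (face_in Hw); [apply: sj|]; exact: gen_cone.
move=> x jx; apply: (face_out Hw) => //; by rewrite w00 dotv0l.
Qed.

Lemma facet_top s : is_facet G s -> cdim (G s) = n.+1.
Proof. exact: pureG. Qed.

Lemma nd_orth t : cdim (G t) = n -> forall k : 'I_(size (G t)), dotv (l t) (G t)`_k = 0.
Proof. by move=> nt; apply: orth_cone_gens; case: (normG nt). Qed.

Lemma nd_nz t : cdim (G t) = n -> l t != 0.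
Proof. by move=> nt; case: (normG nt). Qed.

Lemma top_nonorth s (w : 'rV[R]_(n.+1)) : cdim (G s) = n.+1 -> w != 0 ->
  exists k : 'I_(size (G s)), dotv w (G s)`_k != 0.
Proof.
move=> ts nz; case: (boolP [exists k : 'I_(size (G s)), dotv w (G s)`_k != 0]) => [/existsP //|/existsPn H].
by move/eqP: nz; case; apply: (gens_orth0 ts) => k; apply/eqP; move: (H k); rewrite negbK.
Qed.

Lemma same_side s1 s2 t (l0 u v : 'rV[R]_(n.+1)) :
  cdim (G s1) = n.+1 -> cdim (G s2) = n.+1 -> cdim (G t) = n ->
  sub G t s1 -> sub G t s2 -> l0 != 0 ->
  (forall k : 'I_(size (G t)), dotv l0 (G t)`_k = 0) ->
  cone G s1 u -> cone G s2 v -> 0 < dotv l0 u -> 0 < dotv l0 v -> s1 = s2.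
Proof.
move=> t1 t2 nt ts1 ts2 nz Hl us1 vs2 pu pv.
pose a := dotv l0 u / dotv l0 v.
pose h := u - a *: v.
have hl : dotv l0 h = 0 by rewrite dotvBr dotvZr /a mulfVK ?subrr // gt_eqF.
have [d Hd] := sub_gens (orth_in_span nt nz Hl hl).
pose x0 := \sum_(i < size (G t)) `|d i| *: (G t)`_i.
have x0t : cone G t x0 by exists (fun i => `|d i|); split.
have x0l : dotv l0 x0 = 0 by apply: ph_orth x0t.
have pt : cone G t (x0 + h).
  exists (fun i => `|d i| + d i); split.
    move=> i; case: (lerP 0 (d i)) => hd; first by rewrite addr_ge0.
    by rewrite ltr0_norm // addNr.
  by rewrite Hd -big_split; apply: eq_bigr => i _; rewrite scalerDl.
pose y := x0 + u.
have y1 : cone G s1 y by apply: ph_add; [apply: ts1|].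
have y2 : cone G s2 y.
  have -> : y = (x0 + h) + a *: v by rewrite /y /h addrA subrK.
  apply: ph_add; first by apply: ts2.
  by apply: ph_scale=> //; rewrite /a divr_ge0 // ltW.
have yl : 0 < dotv l0 y by rewrite /y dotvDr x0l add0r.
have [w [w0 Hw]] := faceP s1 s2.
have wt : forall k : 'I_(size (G t)), dotv w (G t)`_k = 0.
  move=> k; apply: (face_in Hw); [apply: ts1|apply: ts2]; exact: gen_cone.
have wl := orth_line nt nz Hl wt.
have wy : dotv w y = 0 by exact: (face_in Hw).
move: wy; rewrite wl dotvZl => /eqP; rewrite mulf_eq0 (gt_eqF yl) orbF => /eqP c0.
have w00 : w = 0 by rewrite wl c0 scale0r.
have s12 : sub G s1 s2.
  move=> x xs1; apply: (face_out Hw) => //.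
  by rewrite w00 dotv0l.
by apply: cone_inj => //; apply: (top_facet t1).
Qed.

Lemma nn_sub t t' : cdim (G t) = n -> cdim (G t') = n -> sub G t t' -> t = t'.
Proof.
move=> nt nt' tt'.
have [w [w0 Hw]] := faceP t' t.
have wt : forall k : 'I_(size (G t)), dotv w (G t)`_k = 0.
  move=> k; apply: (face_in Hw); [apply: tt'|]; exact: gen_cone.
have l't : forall k : 'I_(size (G t)), dotv (l t') (G t)`_k = 0.
  by move=> k; case: (normG nt') => _ H; apply: H; apply: tt'; apply: gen_cone.
have wl := orth_line nt (nd_nz nt) (nd_orth nt) wt.
have ll := orth_line nt (nd_nz nt) (nd_orth nt) l't.
apply: cone_inj => // x xt'.
apply: (face_out Hw) => //.
have : dotv (l t') x = 0 by case: (normG nt') => _ H; apply: H.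
rewrite ll dotvZl => /eqP; rewrite mulf_eq0 => /orP [c0|/eqP lx].
  by move: (nd_nz nt'); rewrite ll (eqP c0) scale0r eqxx.
by rewrite wl dotvZl lx mulr0.
Qed.

Lemma inter_eq s1 s2 t : cdim (G s1) = n.+1 -> cdim (G s2) = n.+1 -> s1 != s2 ->
  cdim (G t) = n -> sub G t s1 -> sub G t s2 ->
  forall x, cone G s1 x /\ cone G s2 x -> cone G t x.
Proof.
move=> t1 t2 ne nt ts1 ts2 x [xs1 xs2].
have [w [w0 Hw]] := faceP s1 s2.
have wt : forall k : 'I_(size (G t)), dotv w (G t)`_k = 0.
  move=> k; apply: (face_in Hw); [apply: ts1|apply: ts2]; exact: gen_cone.
have wl := orth_line nt (nd_nz nt) (nd_orth nt) wt.
have lx : dotv (l t) x = 0.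
  have : dotv w x = 0 by exact: (face_in Hw).
  rewrite wl dotvZl => /eqP; rewrite mulf_eq0 => /orP [c0|/eqP //].
  have w00 : w = 0 by rewrite wl (eqP c0) scale0r.
  have s12 : sub G s1 s2.
    move=> z zs1; have [] // := (Hw z).2; split=> //.
    by rewrite w00 dotv0l.
  by move: ne; rewrite (cone_inj s12 (top_facet t1 s12)) eqxx.
have [w1 [_ Hw1]] := faceP s1 t.
have w1t : forall k : 'I_(size (G t)), dotv w1 (G t)`_k = 0.
  move=> k; apply: (face_in Hw1); [apply: ts1|]; exact: gen_cone.
have w1l := orth_line nt (nd_nz nt) (nd_orth nt) w1t.
apply: (face_out Hw1) => //.
by rewrite w1l dotvZl lx mulr0.
Qed.


Lemma dotvNl (w x : 'rV[R]_(n.+1)) : dotv (- w) x = - dotv w x.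
Proof. by rewrite dotvC dotvNr dotvC. Qed.

Lemma incid_val s t : cdim (G s) = n.+1 -> cdim (G t) = n -> sub G t s ->
  incid G l s t = if has (fun g => 0 < dotv (l t) g) (G s) then 1 else -1.
Proof.
move=> ts nt st; rewrite /incid ts nt !eqxx /=.
by have -> : pb (sub G t s) = true by apply/pbP.
Qed.

Lemma incid0 s t : ~ (cdim (G s) = n.+1 /\ sub G t s) -> incid G l s t = 0.
Proof.
move=> H; rewrite /incid; case: eqP => //= ts; case: eqP => //= nt.
case E : (pb _) => //; exfalso; apply: H; split=> //; exact/pbP.
Qed.

Lemma incid_pm s t : cdim (G s) = n.+1 -> cdim (G t) = n -> sub G t s ->
  incid G l s t = 1 \/ incid G l s t = -1.
Proof. by move=> ts nt st; rewrite incid_val //; case: has; [left|right]. Qed.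

Lemma incid_opp s1 s2 t : cdim (G s1) = n.+1 -> cdim (G s2) = n.+1 -> s1 != s2 ->
  cdim (G t) = n -> sub G t s1 -> sub G t s2 ->
  incid G l s1 t = - incid G l s2 t.
Proof.
move=> t1 t2 ne nt ts1 ts2; rewrite !incid_val //.
case E1: has; case E2: has; rewrite ?opprK //.
- exfalso; move/hasP: E1 => [u uG pu]; move/hasP: E2 => [v vG pv].
  move/eqP: ne; apply; apply: (same_side t1 t2 nt ts1 ts2 (nd_nz nt) (nd_orth nt) (ph_mem uG) (ph_mem vG) pu pv).
- exfalso; move/hasPn: E1 => H1; move/hasPn: E2 => H2.
  have [k1 k1nz] := top_nonorth t1 (nd_nz nt).
  have [k2 k2nz] := top_nonorth t2 (nd_nz nt).
  have p1 : 0 < dotv (- l t) (G s1)`_k1.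
    rewrite dotvNl oppr_gt0 lt_neqAle k1nz /= leNgt; apply: H1; exact: mem_nth.
  have p2 : 0 < dotv (- l t) (G s2)`_k2.
    rewrite dotvNl oppr_gt0 lt_neqAle k2nz /= leNgt; apply: H2; exact: mem_nth.
  have nz : - l t != 0 by rewrite oppr_eq0 nd_nz.
  have orth : forall k : 'I_(size (G t)), dotv (- l t) (G t)`_k = 0.
    by move=> k; rewrite dotvNl nd_orth // oppr0.
  move/eqP: ne; apply; exact: (same_side t1 t2 nt ts1 ts2 nz orth (gen_cone _) (gen_cone _) p1 p2).
Qed.

Lemma dtop_zero (F : 'I_m -> {mpoly R[n.+1]}) t :
  (forall s, ~ (cdim (G s) = n.+1 /\ sub G t s)) -> dtop G l F t = 0.
Proof. by move=> H; rewrite /dtop big1 // => s _; rewrite incid0 // scale0r. Qed.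

Lemma dtop_one (F : 'I_m -> {mpoly R[n.+1]}) t s :
  cdim (G s) = n.+1 -> sub G t s ->
  (forall s', cdim (G s') = n.+1 -> sub G t s' -> s' = s) ->
  dtop G l F t = incid G l s t *: F s.
Proof.
move=> ts st H; rewrite /dtop (bigD1 s) //= big1 ?addr0 // => s' ne.
rewrite incid0 ?scale0r // => [[a b]]; move/eqP: ne; apply; exact: H.
Qed.

Lemma dtop_two (F : 'I_m -> {mpoly R[n.+1]}) t s1 s2 :
  cdim (G s1) = n.+1 -> cdim (G s2) = n.+1 -> s1 != s2 ->
  cdim (G t) = n -> sub G t s1 -> sub G t s2 ->
  dtop G l F t = incid G l s1 t *: (F s1 - F s2).
Proof.
move=> t1 t2 ne nt ts1 ts2; rewrite /dtop (bigD1 s1) //= (bigD1 s2) /=; last by rewrite eq_sym.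
rewrite big1 ?addr0.
  by rewrite (incid_opp t2 t1 _ nt ts2 ts1) 1?eq_sym // scalerBr scaleNr.
move=> s3 /andP [n1 n2]; rewrite incid0 ?scale0r // => [[a b]].
have e1 := incid_opp a t1 n1 nt b ts1.
have e2 := incid_opp a t2 n2 nt b ts2.
have e3 := incid_opp t1 t2 ne nt ts1 ts2.
exact: (key3 e1 e2 e3 (incid_pm t1 nt ts1)).
Qed.



Lemma mdvd_scaleE (p q : {mpoly R[n.+1]}) (c : R) : c != 0 ->
  mdvd p (c *: q) <-> mdvd p q.
Proof.
move=> cz; split=> [[r Hr]|[r ->]].
  exists (c^-1 *: r); by rewrite -scalerAl -Hr scalerA mulVf // scale1r.
by exists (c *: r); rewrite scalerAl.
Qed.

Lemma incid_nz s t : cdim (G s) = n.+1 -> cdim (G t) = n -> sub G t s ->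
  incid G l s t != 0.
Proof.
by move=> a b c; case: (incid_pm a b c) => ->; rewrite ?oppr_eq0 oner_eq0.
Qed.

Lemma mdvd0 (p : {mpoly R[n.+1]}) : mdvd p 0.
Proof. by exists 0; rewrite mul0r. Qed.

Lemma sub_refl t : sub G t t.
Proof. by []. Qed.

Section Alpha.
Variable alpha : 'I_m -> int.

Lemma Sm1_triv t p : cdim (G t) = n -> in_Sm1 G alpha t -> mdvd (lpow l alpha t) p.
Proof.
move=> nt [_ [t' [nt' _ a1 st']]].
rewrite -(nn_sub nt nt' st') in a1.
by exists p; rewrite /lpow a1 addNr /= expr0 mulr1.
Qed.

Lemma J_mdvd t p : cdim (G t) = n -> ~ in_Sm1 G alpha t ->
  in_J G l alpha t p <-> mdvd (lpow l alpha t) p.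
Proof.
move=> nt nS; split.
  case=> [[c _]|[_ [q [Hq ->]]]].
    by move: c; rewrite nt => /eqP; rewrite eqn_leq ltnn andbF.
  exists (q t); rewrite [LHS](bigD1 t) //= big1 ?addr0 // => t' ne.
  rewrite Hq ?mul0r // => [[nt' [_ st']]]; move/eqP: ne; apply; symmetry.
  exact: nn_sub.
case=> r ->; right; split; first by rewrite nt => /eqP; rewrite eqn_leq ltnn andbF.
exists (fun t' => if t' == t then r else 0); split.
  by move=> t' H; case: eqP => // e; exfalso; apply: H; rewrite e; exact: (conj nt (conj nS (fun x h => h))).
rewrite [RHS](bigD1 t) //= eqxx big1 ?addr0 // => t' /negbTE ->; by rewrite mul0r.
Qed.

Lemma bnd_one t : cdim (G t) = n -> in_boundary G t <-> in_one_facet G t.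
Proof.
move=> nt; split.
  by case=> t' [nt' [st' H]]; rewrite (nn_sub nt nt' st').
by move=> H; exists t; split=> //; split=> // x.
Qed.

Lemma main_lemma (F : 'I_m -> {mpoly R[n.+1]}) :
  Htop G l alpha F <-> spline G l alpha F.
Proof.
split.
  case=> tc H; split=> //.
    move=> s1 s2 t t1 t2 nt E.
    have ts1 : sub G t s1 by move=> x /E [].
    have ts2 : sub G t s2 by move=> x /E [].
    case: (eqVneq s1 s2) => [<-|ne]; first by rewrite subrr; apply: mdvd0.
    case: (classic (in_Sm1 G alpha t)) => Sm; first exact: Sm1_triv.
    have := H t nt Sm; rewrite (J_mdvd _ nt Sm) (dtop_two F t1 t2 ne nt ts1 ts2).
    by rewrite mdvd_scaleE // incid_nz.
  move=> s t ts nt bt st.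
  case: (classic (in_Sm1 G alpha t)) => Sm; first exact: Sm1_triv.
  have := H t nt Sm; rewrite (J_mdvd _ nt Sm).
  move/(bnd_one nt): bt => [s0 [fs0 [st0 U]]].
  have uniq : forall s', cdim (G s') = n.+1 -> sub G t s' -> s' = s.
    move=> s' ts' st'; rewrite (U s' (top_facet ts') st'); symmetry.
    exact: U (top_facet ts) st.
  by rewrite (dtop_one F ts st uniq) mdvd_scaleE // incid_nz.
case=> tc Hi Hb; split=> // t nt Sm; rewrite (J_mdvd _ nt Sm).
case: (classic (exists s, cdim (G s) = n.+1 /\ sub G t s)); last first.
  move=> N; rewrite dtop_zero; first exact: mdvd0.
  by move=> s H; apply: N; exists s.
case=> s1 [t1 ts1].
case: (classic (exists s2, [/\ cdim (G s2) = n.+1, sub G t s2 & s2 != s1])).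
  case=> s2 [t2 ts2 ne]; rewrite eq_sym in ne.
  rewrite (dtop_two F t1 t2 ne nt ts1 ts2) mdvd_scaleE ?incid_nz //.
  apply: (Hi s1 s2 t t1 t2 nt) => x; split; last by move=> xt; split; [apply: ts1|apply: ts2].
  exact: inter_eq.
move=> N.
have uniq : forall s', cdim (G s') = n.+1 -> sub G t s' -> s' = s1.
  move=> s' a b; apply/eqP; apply/negPn/negP => c; apply: N; by exists s'.
rewrite (dtop_one F t1 ts1 uniq) mdvd_scaleE ?incid_nz //.
apply: Hb => //; apply/(bnd_one nt); exists s1; split; first exact: top_facet.
split=> // s' fs' st'; apply: uniq => //; exact: pureG.
Qed.

End Alpha.
End Fan.

Theorem lemma3p7 (R : realType) (n m : nat) (G : 'I_m -> seq 'rV[R]_(n.+1))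
    (alpha : 'I_m -> int) (l : 'I_m -> 'rV[R]_(n.+1)) :
  is_fan G -> pure G -> hereditary G -> smoothness G alpha -> normals G l ->
  forall F : 'I_m -> {mpoly R[n.+1]},
    Htop G l alpha F <-> spline G l alpha F.
Proof. by move=> fanG pureG _ _ normG F; exact: main_lemma. Qed.
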